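(* Let $s$ be a Sturmian word having a factorization $s=U_1U_2\cdots U_n\cdots$ where each $U_i$ ($i\ge1$) is a non-empty prefix of $s$. Then there exist integers $i,j\ge1$ with $r_s(U_i)\neq r_s(U_j)$.
   Context: A Sturmian word is an infinite word $s\in\{a,b\}^{\omega}$ that is aperiodic (not ultimately periodic) and balanced: for all factors $u,v$ of $s$ with $|u|=|v|$ one has $||u|_x-|v|_x|\le 1$ for $x\in\{a,b\}$, where $|u|_x$ is the number of occurrences of $x$ in $u$. A non-empty factor $w$ of $s$ is rich in the letter $z\in\{a,b\}$ if there is a factor $v$ of $s$ with $|v|=|w|$ and $|w|_z>|v|_z$; every non-empty factor of a Sturmian word is rich in exactly one letter, and $r_s(w)\in\{a,b\}$ denotes that letter. *)

(* Defs.v *)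
From HB Require Import structures.
From mathcomp Require Import all_boot.
Set Implicit Arguments. Unset Strict Implicit. Unset Printing Implicit Defensive.

Inductive letter := la | lb.
Definition letter_eqb (x y : letter) : bool :=
  match x, y with la, la | lb, lb => true | _, _ => false end.
Lemma letter_eqP : Equality.axiom letter_eqb.
Proof. by case; case; constructor. Qed.
HB.instance Definition _ := hasDecEq.Build letter letter_eqP.

Definition iword := nat -> letter.

Definition factor_at (s : iword) (i n : nat) : seq letter :=
  mkseq (fun k => s (i + k)) n.

Definition is_factor (s : iword) (w : seq letter) : Prop :=
  exists i, w = factor_at s i (size w).

Definition is_prefix (s : iword) (w : seq letter) : Prop :=
  w = factor_at s 0 (size w).

Definition occ (x : letter) (u : seq letter) : nat := count (pred1 x) u.

Definition ultimately_periodic (s : iword) : Prop :=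
  exists p N, 0 < p /\ forall n, N <= n -> s (n + p) = s n.

Definition balanced (s : iword) : Prop :=
  forall u v, is_factor s u -> is_factor s v -> size u = size v ->
  forall x : letter, occ x u <= occ x v + 1 /\ occ x v <= occ x u + 1.

Definition sturmian (s : iword) : Prop :=
  ~ ultimately_periodic s /\ balanced s.

Definition rich_in (s : iword) (w : seq letter) (z : letter) : Prop :=
  w <> [::] /\ is_factor s w /\
  exists v, is_factor s v /\ size v = size w /\ occ z v < occ z w.

(* s = U_0 U_1 U_2 ... (infinite concatenation) *)
Definition start_pos (U : nat -> seq letter) (k : nat) : nat :=
  \sum_(i < k) size (U i).

Definition factorizes (s : iword) (U : nat -> seq letter) : Prop :=
  (forall k, U k <> [::]) /\
  forall k m, m < size (U k) -> s (start_pos U k + m) = nth la (U k) m.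

(* Main.v *)
From Stdlib Require Import Reals Lra Lia ClassicalEpsilon Classical.
Require Import Defs.
From mathcomp Require Import all_boot.
From mathcomp Require Import zify.

Definition F (s : iword) (z : letter) i n := occ z (factor_at s i n).

Lemma size_factor s i n : size (factor_at s i n) = n.
Proof. by rewrite /factor_at size_mkseq. Qed.

Lemma factor_atD s i m n :
  factor_at s i (m + n) = factor_at s i m ++ factor_at s (i + m) n.
Proof.
rewrite /factor_at /mkseq iotaD map_cat; congr (_ ++ _).
rewrite add0n -[in iota m n](addn0 m) iotaDl -map_comp.
by apply: eq_map => k /=; rewrite addnA.
Qed.

Lemma FD s z i m n : F s z i (m + n) = F s z i m + F s z (i + m) n.
Proof. by rewrite /F factor_atD /occ count_cat. Qed.

Lemma F0 s z i : F s z i 0 = 0.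
Proof. by []. Qed.

Lemma bal s z i j n : balanced s -> F s z i n <= F s z j n + 1.
Proof.
move=> Hb.
have Hi : is_factor s (factor_at s i n) by exists i; rewrite size_factor.
have Hj : is_factor s (factor_at s j n) by exists j; rewrite size_factor.
have Hs : size (factor_at s i n) = size (factor_at s j n) by rewrite !size_factor.
by case: (Hb _ _ Hi Hj Hs z).
Qed.

Definition cmin s z n :=
  if excluded_middle_informative (exists i, F s z i n < F s z 0 n)
  then F s z 0 n - 1 else F s z 0 n.
Definition cmax s z n :=
  if excluded_middle_informative (exists i, F s z 0 n < F s z i n)
  then (F s z 0 n).+1 else F s z 0 n.

Section Bal.
Lemma cmin_le s z n i : balanced s -> cmin s z n <= F s z i n.
Proof.
move=> Hb; rewrite /cmin; case: excluded_middle_informative => [[j Hj]|Hn] /=.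
  have := bal s z 0 i n Hb; lia.
by rewrite leqNgt; apply/negP => H; apply: Hn; exists i.
Qed.

Lemma cmax_ge s z n i : balanced s -> F s z i n <= cmax s z n.
Proof.
move=> Hb; rewrite /cmax; case: excluded_middle_informative => [[j Hj]|Hn] /=.
  have := bal s z i 0 n Hb; lia.
by rewrite leqNgt; apply/negP => H; apply: Hn; exists i.
Qed.

Lemma cmin_att s z n : balanced s -> exists i, F s z i n = cmin s z n.
Proof.
move=> Hb; rewrite /cmin; case: excluded_middle_informative => [[j Hj]|Hn] /=.
  exists j; have := bal s z 0 j n Hb; lia.
by exists 0.
Qed.

Lemma cmax_att s z n : balanced s -> exists i, F s z i n = cmax s z n.
Proof.
move=> Hb; rewrite /cmax; case: excluded_middle_informative => [[j Hj]|Hn] /=.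
  exists j; have := bal s z j 0 n Hb; lia.
by exists 0.
Qed.

Lemma cmax_cmin s z n : balanced s -> cmax s z n <= (cmin s z n).+1.
Proof.
move=> Hb; have [i Hi] := cmax_att s z n Hb; have [j Hj] := cmin_att s z n Hb.
have := bal s z i j n Hb; lia.
Qed.

Lemma cmin_super s z m n : balanced s -> cmin s z m + cmin s z n <= cmin s z (m + n).
Proof.
move=> Hb; have [i <-] := cmin_att s z (m + n) Hb.
rewrite FD; have := cmin_le s z m i Hb; have := cmin_le s z n (i + m) Hb; lia.
Qed.

Lemma cmax_sub s z m n : balanced s -> cmax s z (m + n) <= cmax s z m + cmax s z n.
Proof.
move=> Hb; have [i <-] := cmax_att s z (m + n) Hb.
rewrite FD; have := cmax_ge s z m i Hb; have := cmax_ge s z n (i + m) Hb; lia.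
Qed.

Lemma cmax0 s z : balanced s -> cmax s z 0 = 0.
Proof. by move=> Hb; have [i <-] := cmax_att s z 0 Hb. Qed.

Lemma cmin_mul s z n k : balanced s -> n * cmin s z k <= cmin s z (n * k).
Proof.
move=> Hb; elim: n => [|n IH] //; rewrite !mulSn.
have := cmin_super s z k (n * k) Hb; lia.
Qed.

Lemma cmax_mul s z n k : balanced s -> cmax s z (n * k) <= n * cmax s z k.
Proof.
move=> Hb; elim: n => [|n IH]; first by rewrite mul0n cmax0.
rewrite !mulSn; have := cmax_sub s z k (n * k) Hb; lia.
Qed.

Lemma cmin_cmax s z n : balanced s -> cmin s z n <= cmax s z n.
Proof. move=> Hb; have := cmin_le s z n 0 Hb; have := cmax_ge s z n 0 Hb; lia. Qed.

Lemma key s z n k : balanced s -> n * cmin s z k <= k * cmax s z n.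
Proof.
move=> Hb; have := cmin_mul s z n k Hb; have := cmin_cmax s z (n * k) Hb.
have := cmax_mul s z k n Hb; rewrite (mulnC k n); lia.
Qed.
End Bal.

Open Scope R_scope.

Lemma INR_le (m n : nat) : (m <= n)%N -> INR m <= INR n.
Proof. by move/leP; apply: le_INR. Qed.

Lemma INR_pos (n : nat) : (0 < n)%N -> 0 < INR n.
Proof. by move/ltP; apply: lt_0_INR. Qed.

Definition Eset s z (x : R) := exists k, (0 < k)%N /\ x = INR (cmin s z k) / INR k.

Lemma div_le a b c d : 0 < b -> 0 < d -> a * d <= c * b -> a / b <= c / d.
Proof.
move=> Hb Hd H; apply (Rmult_le_reg_r (b * d)); first nra.
replace (a / b * (b * d)) with (a * d) by (field; lra).
replace (c / d * (b * d)) with (c * b) by (field; lra). lra.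
Qed.

Lemma Eset_bound s z (n : nat) : balanced s -> (0 < n)%N ->
  forall x, Eset s z x -> x <= INR (cmax s z n) / INR n.
Proof.
move=> Hb Hn x [k [Hk ->]]; apply: div_le; try exact: INR_pos.
rewrite -!mult_INR; apply: INR_le.
have := key s z n k Hb; lia.
Qed.

Lemma alpha_ex s z : balanced s -> exists a, forall n,
  INR (cmin s z n) <= INR n * a <= INR (cmax s z n).
Proof.
move=> Hb.
have Hbd : bound (Eset s z).
  exists (INR (cmax s z 1) / INR 1) => x Hx; exact: Eset_bound.
have Hne : exists x, Eset s z x by exists (INR (cmin s z 1) / INR 1); exists 1%N.
case: (completeness _ Hbd Hne) => a [Hub Hlub].
exists a => n; case: (posnP n) => [->|Hn].
  have H0 := cmin_cmax s z 0 Hb; rewrite cmax0 // in H0 *.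
  have -> : cmin s z 0 = 0%N by lia.
  simpl; lra.
have Hnp := INR_pos n Hn.
split.
  have : INR (cmin s z n) / INR n <= a by apply: Hub; exists n.
  move=> H; apply (Rmult_le_compat_r (INR n)) in H; last lra.
  replace (INR (cmin s z n) / INR n * INR n) with (INR (cmin s z n)) in H
    by (field; lra). lra.
have : a <= INR (cmax s z n) / INR n.
  apply: Hlub => x Hx; exact: Eset_bound.
move=> H; apply (Rmult_le_compat_r (INR n)) in H; last lra.
replace (INR (cmax s z n) / INR n * INR n) with (INR (cmax s z n)) in H
  by (field; lra). lra.
Qed.

Definition D s z a n := INR (F s z 0 n) - INR n * a.

Definition AlphaP s z a := forall n,
  INR (cmin s z n) <= INR n * a <= INR (cmax s z n).

Lemma INR_S' (n : nat) : INR n.+1 = INR n + 1.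
Proof. exact: S_INR. Qed.

Lemma INR_add (m n : nat) : INR (m + n) = INR m + INR n.
Proof. exact: plus_INR. Qed.

Lemma D_bounds s z a n : balanced s -> AlphaP s z a -> -1 <= D s z a n <= 1.
Proof.
move=> Hb Ha; rewrite /D.
have H1 := cmax_ge s z n 0 Hb; have H2 := cmin_le s z n 0 Hb.
have H3 := cmax_cmin s z n Hb.
have := INR_le _ _ H1; have := INR_le _ _ H2; have := INR_le _ _ H3.
rewrite INR_S'; have := Ha n; lra.
Qed.

Lemma D_shift s z a N n :
  D s z a (N + n) = D s z a N + INR (F s z N n) - INR n * a.
Proof. rewrite /D FD add0n !INR_add; ring. Qed.

Fixpoint sumf (f : nat -> R) (N n : nat) : R :=
  match n with 0 => 0 | k.+1 => sumf f N k + f (N + k)%N end.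

Lemma sumf_shift f N n : sumf f N.+1 n = sumf f N n - f N + f (N + n)%N.
Proof.
elim: n => [|n IH] /=; first by rewrite addn0; ring.
rewrite IH addSnnS; ring.
Qed.

Lemma sumf_bound f N n : (forall m, -1 <= f m <= 1) ->
  - INR n <= sumf f N n <= INR n.
Proof.
move=> Hf; elim: n => [|n IH]; first (simpl; lra).
change (sumf f N n.+1) with (sumf f N n + f (N + n)%N).
rewrite INR_S'; have := Hf (N + n)%N; lra.
Qed.

Lemma F1 s z m : F s z m 1 = (s m == z) :> nat.
Proof. by rewrite /F /factor_at /mkseq /= addn0 /occ /= addn0. Qed.

Lemma F_step s z m n :
  (F s z m 1 + F s z (m + 1) n = F s z m n + F s z (m + n) 1)%N.
Proof. by rewrite -!FD addnC. Qed.

Lemma bad_exists s z n : balanced s -> ~ ultimately_periodic s -> (0 < n)%N ->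
  forall N, exists N', (N <= N')%N /\ (F s z N' n < cmax s z n)%N.
Proof.
move=> Hb Hnp Hn N; apply: NNPP => Hc; apply: Hnp; exists n, N; split => //.
move=> m Hm; apply: NNPP => Hneq.
have Hst := F_step s z m n; rewrite !F1 in Hst.
have Hx : addn (s m == z) (s (addn m n) == z) = 1%N.
  by clear -Hneq; move: Hneq; case: (s m); case: (s (m + n)%N); case: z.
have Ha := cmax_ge s z n m Hb; have Hb2 := cmax_ge s z n (m + 1)%N Hb.
apply: Hc.
case: (s m == z) Hx Hst => /= Hx Hst.
  exists (m + 1)%N; split; [lia|lia].
exists m; split; [lia|lia].
Qed.

Lemma D_pos s z a n : balanced s -> ~ ultimately_periodic s -> AlphaP s z a ->
  (0 < n)%N -> (exists i, F s z i n < F s z 0 n)%N -> 0 < D s z a n.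
Proof.
move=> Hb Hnp Ha Hn [i Hi].
have H1 := cmin_le s z n i Hb; have H3 := cmax_cmin s z n Hb.
have H4 := cmax_ge s z n 0 Hb.
have Heq : F s z 0 n = cmax s z n by lia.
have HD : D s z a n = INR (cmax s z n) - INR n * a by rewrite /D Heq.
case: (Rlt_dec 0 (D s z a n)) => // Hnd.
have HE : INR (cmax s z n) = INR n * a by have := Ha n; lra.
have Hwin : forall N, D s z a (N + n) <= D s z a N.
  move=> N; rewrite D_shift; have := INR_le _ _ (cmax_ge s z n N Hb); lra.
have Hbad : forall N, (F s z N n < cmax s z n)%N -> D s z a (N + n) <= D s z a N - 1.
  move=> N HN; rewrite D_shift; have := INR_le _ _ HN; rewrite INR_S'; lra.
pose Psi N := sumf (D s z a) N n.
have Hstep : forall N, Psi N.+1 <= Psi N.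
  by move=> N; rewrite /Psi sumf_shift; have := Hwin N; lra.
have Hstepb : forall N, (F s z N n < cmax s z n)%N -> Psi N.+1 <= Psi N - 1.
  by move=> N HN; rewrite /Psi sumf_shift; have := Hbad N HN; lra.
have Hmono : forall j N, Psi (N + j)%N <= Psi N.
  elim=> [|j IH] N; first by rewrite addn0; lra.
  rewrite addnS; have := Hstep (N + j)%N; have := IH N; lra.
have Hbnd : forall N, - INR n <= Psi N <= INR n.
  move=> N; apply: sumf_bound => m; exact: D_bounds.
have Hclaim : forall t, exists N, Psi N <= Psi 0%N - INR t.
  elim=> [|t [N HN]]; first by exists 0%N; simpl; lra.
  have [N' [HN' Hbd']] := bad_exists s z n Hb Hnp Hn N.
  exists N'.+1; have := Hstepb N' Hbd'.
  have := Hmono (N' - N)%N N; rewrite subnKC // INR_S'; lra.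
have [N HN] := Hclaim (n + n).+1%N.
have := Hbnd N; have := Hbnd 0%N; rewrite INR_S' INR_add in HN; lra.
Qed.

Fixpoint etaf (f : nat -> R) (B : nat) : R :=
  match B with
  | 0%N => 1
  | b.+1 => Rmin (etaf f b) (if Rlt_dec 0 (f b.+1) then f b.+1 else 1)
  end.

Lemma etaf_pos f B : 0 < etaf f B.
Proof.
elim: B => [|b IH] /=; first lra.
apply: Rmin_glb_lt => //; case: Rlt_dec => H /=; lra.
Qed.

Lemma etaf_le f B m : (0 < m)%N -> (m <= B)%N -> 0 < f m -> etaf f B <= f m.
Proof.
elim: B => [|b IH] Hm HmB Hf; first lia.
rewrite /=; case: (ltngtP m b.+1) HmB => // [Hlt|Em] _; last subst m.
  apply: Rle_trans (Rmin_l _ _) _; apply: IH => //.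
apply: Rle_trans (Rmin_r _ _) _; case: Rlt_dec => H /=; lra.
Qed.

Lemma occ_ab w : (occ la w + occ lb w)%N = size w.
Proof.
rewrite /occ -(count_predC (pred1 la) w); congr (_ + _)%N.
by apply: eq_count; case.
Qed.

Lemma rich_any s n : ~ ultimately_periodic s -> (0 < n)%N ->
  exists z, rich_in s (factor_at s 0 n) z.
Proof.
move=> Hnp Hn.
have [m Hm] : exists m, s (m + n)%N <> s m.
  apply: NNPP => Hc; apply: Hnp; exists n, 0%N; split => // m _.
  by apply: NNPP => H; apply: Hc; exists m.
have Hx : addn (s m == la) (s (addn m n) == la) = 1%N.
  by clear -Hm; move: Hm; case: (s m); case: (s (m + n)%N).
have Hst := F_step s la m n; rewrite !F1 in Hst.
have Hw : factor_at s 0 n <> [::].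
  by move=> H; have := size_factor s 0 n; rewrite H /=; lia.
have Hf0 : is_factor s (factor_at s 0 n) by exists 0%N; rewrite size_factor.
have Hab : forall j, (F s la j n + F s lb j n)%N = n.
  by move=> j; rewrite /F occ_ab size_factor.
have Hv : forall j, is_factor s (factor_at s j n) /\
    size (factor_at s j n) = size (factor_at s 0 n).
  by move=> j; split; [exists j; rewrite size_factor | rewrite !size_factor].
have Hla : forall j, (F s la j n < F s la 0 n)%N -> rich_in s (factor_at s 0 n) la.
  move=> j Hj; split=> //; split=> //; exists (factor_at s j n).
  by have [H1 H2] := Hv j; split=> //; split.
have Hlb : forall j, (F s lb j n < F s lb 0 n)%N -> rich_in s (factor_at s 0 n) lb.
  move=> j Hj; split=> //; split=> //; exists (factor_at s j n).
  by have [H1 H2] := Hv j; split=> //; split.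
case: (ltnP (F s la m n) (F s la 0 n)) => H1; first by exists la; exact: (Hla m).
case: (ltnP (F s la (m + 1)%N n) (F s la 0 n)) => H2; first by exists la; exact: (Hla (m+1)%N).
have := Hab 0%N; have := Hab m; have := Hab (m + 1)%N.
case: (s m == la) Hx Hst => /= Hx Hst H3 H4 H5.
  exists lb; apply: (Hlb m); lia.
exists lb; apply: (Hlb (m + 1)%N); lia.
Qed.

Lemma core s z U : balanced s -> ~ ultimately_periodic s -> factorizes s U ->
  (forall k, is_prefix s (U k)) -> (forall k, rich_in s (U k) z) -> False.
Proof.
move=> Hb Hnp [Hne Hfac] Hpre Hrich.
have [a Ha] := alpha_ex s z Hb.
set Dd := D s z a.
have HU : forall k, U k = factor_at s 0 (size (U k)) := Hpre.
have Hn : forall k, (0 < size (U k))%N.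
  by move=> k; rewrite lt0n size_eq0; apply/eqP; exact: Hne.
have Hsp : forall k, start_pos U k.+1 = (start_pos U k + size (U k))%N.
  by move=> k; rewrite /start_pos big_ord_recr.
have Hsp0 : start_pos U 0 = 0%N by rewrite /start_pos big_ord0.
have Hnth : forall k j, (j < size (U k))%N -> nth la (U k) j = s j.
  move=> k j Hj; rewrite (HU k) /factor_at nth_mkseq //.
have Hshift : forall k m, (m <= size (U k))%N ->
    factor_at s (start_pos U k) m = factor_at s 0 m.
  move=> k m Hm; rewrite /factor_at /mkseq; apply/eq_in_map => j.
  rewrite mem_iota add0n => /andP[_ Hj].
  rewrite Hfac; last lia.
  rewrite Hnth //; lia.
have Hadd : forall k m, (m <= size (U k))%N ->
    Dd (start_pos U k + m)%N = Dd (start_pos U k) + Dd m.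
  move=> k m Hm; rewrite /Dd D_shift /D /F Hshift //; ring.
have Hrec : forall k, Dd (start_pos U k.+1) = Dd (start_pos U k) + Dd (size (U k)).
  by move=> k; rewrite Hsp Hadd.
have HD0 : Dd 0%N = 0 by rewrite /Dd /D /=; ring.
have Hpos : forall k, 0 < Dd (size (U k)).
  move=> k; apply: D_pos => //.
  have [_ [_ [v [[i Hv] [Hsz Hlt]]]]] := Hrich k.
  exists i; rewrite /F -Hsz -Hv Hsz -(HU k); exact: Hlt.
have Hge0 : forall k, 0 <= Dd (start_pos U k).
  elim=> [|k IH]; first by rewrite Hsp0 HD0; lra.
  rewrite Hrec; have := Hpos k; lra.
have Hbd : forall m, Dd m <= 1 by move=> m; have := D_bounds s z a m Hb Ha; rewrite /Dd; lra.
case: (classic (exists B, forall k, (size (U k) <= B)%N)) => [[B HB]|HnB].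
  pose eta := etaf Dd B.
  have Heta := etaf_pos Dd B.
  have Hk : forall k, INR k * eta <= Dd (start_pos U k).
    elim=> [|k IH]; first by rewrite Hsp0 HD0 /=; lra.
    rewrite Hrec INR_S'.
    have := etaf_le Dd B (size (U k)) (Hn k) (HB k) (Hpos k); rewrite -/eta; lra.
  have [N [HN HN0]] := archimed_cor1 eta Heta.
  have HNp : 0 < INR N.
    by apply: lt_0_INR.
  have : 1 < INR N * eta.
    apply (Rmult_lt_compat_l (INR N)) in HN => //.
    by rewrite Rinv_r in HN; lra.
  have := Hk N; have := Hbd (start_pos U N); lra.
have Hunb : forall B, exists k, (B < size (U k))%N.
  move=> B; apply: NNPP => H; apply: HnB; exists B => k.
  by rewrite leqNgt; apply/negP => Hk; apply: H; exists k.
set del := Dd (size (U 0%N)).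
have Hdel := Hpos 0%N.
have Hge1 : forall k, del <= Dd (start_pos U k.+1).
  elim=> [|k IH]; first by rewrite Hrec Hsp0 HD0 /del; lra.
  rewrite Hrec; have := Hpos k.+1; lra.
have Hclaim : forall t, exists m, INR t * del <= Dd m.
  elim=> [|t [m Hm]]; first by exists 0%N; rewrite HD0 /=; lra.
  have [k Hk] := Hunb (maxn m (size (U 0%N))).
  case: k Hk => [|k] Hk; first by move: Hk; rewrite ltnNge leq_maxr.
  exists (start_pos U k.+1 + m)%N; rewrite Hadd; last first.
    by move: Hk; rewrite gtn_max => /andP[H _]; lia.
  rewrite INR_S'; have := Hge1 k; lra.
have [N [HN HN0]] := archimed_cor1 del Hdel.
have HNp : 0 < INR N.
  by apply: lt_0_INR.
have : 1 < INR N * del.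
  apply (Rmult_lt_compat_l (INR N)) in HN => //.
  by rewrite Rinv_r in HN; lra.
have [m Hm] := Hclaim N; have := Hbd m; lra.
Qed.

Theorem mainTheorem7 (s : iword) (U : nat -> seq letter) :
  sturmian s ->
  factorizes s U ->
  (forall k, is_prefix s (U k)) ->
  exists i j (zi zj : letter),
    rich_in s (U i) zi /\ rich_in s (U j) zj /\ zi <> zj.
Proof.
move=> [Hnp Hb] Hfac Hpre.
apply: NNPP => Hc.
have Hrich : forall k, exists z, rich_in s (U k) z.
  move=> k; rewrite (Hpre k); apply: rich_any => //.
  by rewrite lt0n size_eq0; apply/eqP; exact: (proj1 Hfac k).
have [z0 H0] := Hrich 0%N.
apply: (core s z0 U Hb Hnp Hfac Hpre) => k.
have [zk Hk] := Hrich k.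
case: (zk =P z0) => [<-|Hne] //.
by exfalso; apply: Hc; exists 0%N, k, z0, zk; split => //; split => // ?; apply: Hne.
Qed.
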